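(* Let $K$ be a field of characteristic $p$ with $K \neq \mathbb{F}_2$, and let $X_1,\dots,X_m$ be quasi-projective varieties over $K$. If for each $1 \le i \le m$ the set $S_i \subseteq \mathbb{N}_0$ is a $K$-DML set over $X_i$, then both $\bigcup_{i=1}^m S_i$ and $\bigcap_{i=1}^m S_i$ are $K$-DML sets over $X_1 \times \cdots \times X_m$.
   Context: For a quasi-projective variety $X$ over a field $K$, a set $S \subseteq \mathbb{N}_0$ is a $K$-DML set over $X$ if there exist an endomorphism $\Phi$ of $X$ (a morphism $X \to X$ defined over $K$), a point $\alpha \in X(K)$ and a closed subvariety $V \subseteq X$ defined over $K$ (not necessarily irreducible) such that $S = \{ n \in \mathbb{N}_0 : \Phi^n(\alpha) \in V(K)\}$. $\mathbb{N}_0$ denotes the nonnegative integers. *)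

(* Defs.v *)
From HB Require Import structures.
From mathcomp Require Import all_boot all_order all_algebra.
From mathcomp Require Export mpoly.
From Stdlib Require List.
Unset Strict Implicit.
Unset Printing Implicit Defensive.
Import Order.TTheory GRing.Theory Num.Theory.
Local Open Scope ring_scope.

(* Classical (Weil-style) model of quasi-projective varieties over a field K:
   we fix an algebraically closed field L together with an embedding
   iota : K -> L; points of P^N are represented by nonzero vectors
   x : 'I_N.+1 -> L, and every subset we consider is invariant under
   nonzero rescaling. *)

Section QP.
Variables (K : fieldType) (L : closedFieldType) (iota : {rmorphism K -> L}).

Definition evK {n : nat} (p : {mpoly K[n]}) (x : 'I_n -> L) : L :=
  (map_mpoly iota p).@[x].

Definition polyK (n : nat) := {mpoly K[n]}.

Definition nonzero_vec {n : nat} (x : 'I_n -> L) : Prop := exists i, x i != 0.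

Definition proportional {n : nat} (x y : 'I_n -> L) : Prop :=
  nonzero_vec x /\ exists c : L, c != 0 /\ y = (fun i => c * x i).

(* A "projective set": an ambient dimension N (the set lives in P^N(L))
   and a predicate on representative vectors. *)
Record pset := PSet { pdim : nat; ppts : ('I_pdim.+1 -> L) -> Prop }.

Definition homogK {n : nat} (p : {mpoly K[n]}) : Prop := exists d, p \is d.-homog.

(* X is a quasi-projective variety over K: a locally closed subset
   V(F) \ V(G) of P^N, F and G finite families of homogeneous polynomials
   with coefficients in K. *)
Definition is_qpvar (X : pset) : Prop :=
  exists F G : seq (polyK (pdim X).+1),
    (forall f, List.In f F -> homogK f) /\ (forall g, List.In g G -> homogK g) /\
    forall x, ppts X x <->
      (nonzero_vec x /\ (forall f, List.In f F -> evK f x = 0) /\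
       (exists g, List.In g G /\ evK g x != 0)).

(* phi is (a representative-level lift of) an endomorphism of X defined over
   K: phi is locally on X given by tuples of homogeneous polynomials of a
   common degree with coefficients in K; the open sets where the tuples do not
   vanish cover X, the tuples agree (projectively) on overlaps, and phi maps
   X into X. *)
Definition is_Kendo (X : pset)
  (phi : ('I_(pdim X).+1 -> L) -> ('I_(pdim X).+1 -> L)) : Prop :=
  exists pats : seq (nat * ('I_(pdim X).+1 -> polyK (pdim X).+1)),
    (forall pat, List.In pat pats -> forall i, pat.2 i \is pat.1.-homog) /\
    forall x, ppts X x ->
      ppts X (phi x) /\
      (exists pat, List.In pat pats /\ nonzero_vec (fun i => evK (pat.2 i) x)) /\
      (forall pat, List.In pat pats -> nonzero_vec (fun i => evK (pat.2 i) x) ->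
         proportional (fun i => evK (pat.2 i) x) (phi x)).

Definition Krational {n : nat} (alpha : 'I_n -> L) : Prop :=
  exists a : 'I_n -> K, alpha = (fun i => iota (a i)).

Definition KDML (X : pset) (S : nat -> Prop) : Prop :=
  exists phi, is_Kendo X phi /\
  exists alpha, ppts X alpha /\ Krational alpha /\
  exists H : seq (polyK (pdim X).+1),
    (forall h, List.In h H -> homogK h) /\
    forall n, S n <->
      (ppts X (iter n phi alpha) /\ forall h, List.In h H -> evK h (iter n phi alpha) = 0).

(* Segre embedding P^a x P^b -> P^((a+1)(b+1)-1); note (b + a * b.+1).+1
   = a.+1 * b.+1. *)
Definition segre {a b : nat} (x : 'I_a.+1 -> L) (y : 'I_b.+1 -> L)
  : 'I_(b + a * b.+1).+1 -> L :=
  fun k => x (inord (k %/ b.+1)) * y (inord (k %% b.+1)).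

Definition pprod (X Y : pset) : pset :=
  @PSet (pdim Y + pdim X * (pdim Y).+1)
    (fun z => exists x y, ppts X x /\ ppts Y y /\ proportional (segre x y) z).

(* the point Spec K = P^0 (empty product) *)
Definition ppoint : pset := @PSet 0 (fun x => nonzero_vec x).

Fixpoint pprod_seq (s : seq pset) : pset :=
  match s with
  | [::] => ppoint
  | [:: X] => X
  | X :: s' => pprod X (pprod_seq s')
  end.

End QP.

Arguments evK {K L} iota {n} p x.
Arguments nonzero_vec {L n} x.
Arguments proportional {L n} x y.
Arguments pset L : clear implicits.
Arguments PSet {L} pdim ppts.
Arguments pdim {L} p.
Arguments ppts {L} p _.
Arguments homogK {K n} p.
Arguments is_qpvar {K L} iota X.
Arguments is_Kendo {K L} iota X phi.
Arguments Krational {K L} iota {n} alpha.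
Arguments KDML {K L} iota X S.
Arguments segre {L a b} x y _.
Arguments pprod {L} X Y.
Arguments ppoint {L}.
Arguments pprod_seq {L} s.

(* Main.v *)
Require Import Defs.
From HB Require Import structures.
From mathcomp Require Import all_boot all_order all_algebra.
From mathcomp Require Import mpoly.
From Stdlib Require List.
From mathcomp Require Import zify ring.
From Stdlib Require FunctionalExtensionality Classical.

Module Helpers.
Set Implicit Arguments.
Unset Strict Implicit.
Unset Printing Implicit Defensive.
Import Order.TTheory GRing.Theory Num.Theory.
Local Open Scope ring_scope.


Section Poly.
Variables (K : fieldType) (L : closedFieldType) (iota : {rmorphism K -> L}).

Lemma evK_expand n (p : {mpoly K[n]}) v :
  evK iota p v = \sum_(m <- msupp p) iota p@_m * \prod_i v i ^+ m i.
Proof.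
rewrite /evK mevalE (perm_big _ (msupp_map_mpoly _ (fmorph_inj iota))).
by apply: eq_bigr => m _; rewrite mcoeff_map_mpoly.
Qed.

Lemma evK_scale n d (p : {mpoly K[n]}) (c : L) v : p \is d.-homog ->
  evK iota p (fun i => c * v i) = c ^+ d * evK iota p v.
Proof.
move=> hp; rewrite !evK_expand mulr_sumr; apply: eq_big_seq => m hm.
have e : (\sum_i m i)%N = d by rewrite -mdegE; exact: (dhomog_mf hp hm).
rewrite -e.
rewrite (eq_bigr (fun i => c ^+ m i * v i ^+ m i)); last by move=> i _; rewrite exprMn.
by rewrite big_split /= prodrXr mulrCA.
Qed.

Definition subst n k (g : 'I_n -> 'I_k) (p : {mpoly K[n]}) : {mpoly K[k]} :=
  p \mPo [tuple 'X_(g i) | i < n].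

Lemma evK_subst n k (g : 'I_n -> 'I_k) p v :
  evK iota (subst g p) v = evK iota p (fun i => v (g i)).
Proof.
rewrite /subst /evK (map_mpoly_comp _ _ (fmorph_inj iota)) comp_mpoly_meval.
apply: meval_eq => i; rewrite tnth_map tnth_mktuple map_mpolyX mevalXU //.
Qed.

Lemma subst_homog n k (g : 'I_n -> 'I_k) d p :
  p \is d.-homog -> subst g p \is d.-homog.
Proof.
move=> hp; rewrite /subst comp_mpolyE big_seq.
apply: (big_ind (fun q => q \is d.-homog)); first exact: dhomog0.
  by move=> x y; apply: dhomogD.
move=> m hm; apply: dhomogZ.
have e : (\sum_i m i)%N = d by rewrite -mdegE; exact: (dhomog_mf hp hm).
rewrite -e.
apply: (big_ind2 (fun q (e0:nat) => q \is e0.-homog)); first exact: dhomog1.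
  by move=> a b c e1 ha hc; apply: dhomogM.
move=> i _; rewrite tnth_mktuple.
have h1 : ('X_(g i) : {mpoly K[k]}) \is 1.-homog by rewrite dhomogX; apply/eqP; exact: mdeg1.
by have := dhomogMn (m i) h1; rewrite mul1n.
Qed.

End Poly.


Section PropS.
Variable (L : closedFieldType).

Definition scalev n (c : L) (x : 'I_n -> L) := fun i => c * x i.

Lemma nz_scale n c (x : 'I_n -> L) : c != 0 -> nonzero_vec x -> nonzero_vec (scalev c x).
Proof. by move=> hc [i hi]; exists i; rewrite /scalev mulf_neq0. Qed.

Lemma nz_scale_inv n c (x : 'I_n -> L) : nonzero_vec (scalev c x) -> c != 0 /\ nonzero_vec x.
Proof.
move=> [i]; rewrite /scalev mulf_eq0 negb_or => /andP[h1 h2]; split => //; by exists i.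
Qed.

Lemma prop_refl n (x : 'I_n -> L) : nonzero_vec x -> proportional x x.
Proof.
move=> hx; split => //; exists 1; split; first exact: oner_neq0.
by apply: FunctionalExtensionality.functional_extensionality => i; rewrite mul1r.
Qed.

Lemma prop_scale n c (x : 'I_n -> L) : c != 0 -> nonzero_vec x -> proportional x (scalev c x).
Proof. by move=> hc hx; split => //; exists c. Qed.

Lemma prop_nz2 n (x y : 'I_n -> L) : proportional x y -> nonzero_vec y.
Proof. by move=> [hx [c [hc ->]]]; exact: nz_scale. Qed.

Lemma prop_sym n (x y : 'I_n -> L) : proportional x y -> proportional y x.
Proof.
move=> h; have hy := prop_nz2 h; case: h => hx [c [hc e]]; split; first exact: hy.
rewrite e.
exists c^-1; split; first by rewrite invr_eq0.
apply: FunctionalExtensionality.functional_extensionality => i.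
by rewrite mulrA mulVf // mul1r.
Qed.

Lemma prop_trans n (x y z : 'I_n -> L) :
  proportional x y -> proportional y z -> proportional x z.
Proof.
move=> [hx [c [hc ->]]] [_ [e [he ->]]]; split => //.
exists (e * c); split; first by rewrite mulf_neq0.
apply: FunctionalExtensionality.functional_extensionality => i.
by rewrite mulrA.
Qed.

Section Segre.
Variables (a b : nat).

Definition pairI (i : 'I_a.+1) (j : 'I_b.+1) : 'I_(b + a * b.+1).+1.
Proof.
apply: (@Ordinal _ (i * b.+1 + j)%N).
have hi := ltn_ord i; have hj := ltn_ord j.
have : (i * b.+1 <= a * b.+1)%N by rewrite leq_mul2r; apply/orP; right; rewrite -ltnS.
lia.
Defined.

Lemma segre_pair (x : 'I_a.+1 -> L) (y : 'I_b.+1 -> L) i j :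
  segre x y (pairI i j) = x i * y j.
Proof.
rewrite /segre /pairI /=.
have e1 : ((i * b.+1 + j) %/ b.+1)%N = i.
  by rewrite divnMDl // divn_small // addn0.
have e2 : ((i * b.+1 + j) %% b.+1)%N = j.
  by rewrite modnMDl modn_small.
by rewrite e1 e2 !inord_val.
Qed.

Lemma segre_nz (x : 'I_a.+1 -> L) (y : 'I_b.+1 -> L) :
  nonzero_vec x -> nonzero_vec y -> nonzero_vec (segre x y).
Proof.
by move=> [i hi] [j hj]; exists (pairI i j); rewrite segre_pair mulf_neq0.
Qed.

Lemma segre_nz_inv (x : 'I_a.+1 -> L) (y : 'I_b.+1 -> L) :
  nonzero_vec (segre x y) -> nonzero_vec x /\ nonzero_vec y.
Proof.
move=> [k]; rewrite /segre mulf_eq0 negb_or => /andP[h1 h2].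
by split; eexists; eassumption.
Qed.

Lemma segre_scale c e (x : 'I_a.+1 -> L) (y : 'I_b.+1 -> L) :
  segre (scalev c x) (scalev e y) = scalev (c * e) (segre x y).
Proof.
apply: FunctionalExtensionality.functional_extensionality => k.
rewrite /segre /scalev; by rewrite mulrACA.
Qed.

Lemma prop_segre (x x' : 'I_a.+1 -> L) (y y' : 'I_b.+1 -> L) :
  proportional x x' -> proportional y y' -> proportional (segre x y) (segre x' y').
Proof.
move=> [hx [c [hc ->]]] [hy [e [he ->]]].
rewrite (segre_scale c e x y); apply: prop_scale; first by rewrite mulf_neq0.
exact: segre_nz.
Qed.

End Segre.
End PropS.


Lemma inP_list (T : eqType) (x : T) (s : seq T) : x \in s -> List.In x s.
Proof.
elim: s => //= y s IH; rewrite in_cons => /orP[/eqP ->|h]; [by left|by right; apply: IH].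
Qed.

Lemma In_enum (T : finType) (x : T) : List.In x (enum T).
Proof. by apply: inP_list; rewrite mem_enum. Qed.

Section Bin.
Variables (K : fieldType) (L : closedFieldType) (iota : {rmorphism K -> L}).

Definition evp n k (pat : nat * ('I_n -> {mpoly K[k]})) (w : 'I_k -> L) : 'I_n -> L :=
  fun i => evK iota (pat.2 i) w.

Definition nzb n (v : 'I_n -> L) : bool := [exists i, v i != 0].

Lemma nzbP n (v : 'I_n -> L) : reflect (nonzero_vec v) (nzb v).
Proof.
apply: (iffP existsP) => [[i hi]|[i hi]]; by exists i.
Qed.

Lemma evK_mul n (p q : {mpoly K[n]}) v : evK iota (p * q) v = evK iota p v * evK iota q v.
Proof. by rewrite /evK rmorphM /= mevalM. Qed.

Definition NZ (X : pset L) := forall x, ppts X x -> nonzero_vec x.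

Variables (X Y : pset L).
Local Notation a := (pdim X).
Local Notation b := (pdim Y).
Local Notation N := (b + a * b.+1)%N.

Definition liftX (j : 'I_b.+1) (p : {mpoly K[a.+1]}) : {mpoly K[N.+1]} :=
  subst (fun i => pairI i j) p.
Definition liftY (i : 'I_a.+1) (q : {mpoly K[b.+1]}) : {mpoly K[N.+1]} :=
  subst (fun j => pairI i j) q.

Lemma evK_liftX j d p c u v : p \is d.-homog ->
  evK iota (liftX j p) (scalev c (segre u v)) = (c * v j) ^+ d * evK iota p u.
Proof.
move=> hp; rewrite /liftX evK_subst -evK_scale //; congr evK.
apply: FunctionalExtensionality.functional_extensionality => i.
rewrite /scalev segre_pair; ring.
Qed.

Lemma evK_liftY i d q c u v : q \is d.-homog ->
  evK iota (liftY i q) (scalev c (segre u v)) = (c * u i) ^+ d * evK iota q v.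
Proof.
move=> hq; rewrite /liftY evK_subst -evK_scale //; congr evK.
apply: FunctionalExtensionality.functional_extensionality => j.
rewrite /scalev segre_pair; ring.
Qed.


Definition mkpat (p1 : nat * ('I_a.+1 -> polyK K a.+1)) (p2 : nat * ('I_b.+1 -> polyK K b.+1))
  (i0 : 'I_a.+1) (j0 : 'I_b.+1) : nat * ('I_N.+1 -> polyK K N.+1) :=
  ((p1.1 + p2.1)%N, fun k : 'I_N.+1 => liftX j0 (p1.2 (inord (k %/ b.+1))) * liftY i0 (p2.2 (inord (k %% b.+1)))).

Lemma mkpat_homog p1 p2 i0 j0 :
  (forall i, p1.2 i \is p1.1.-homog) -> (forall j, p2.2 j \is p2.1.-homog) ->
  forall k, (mkpat p1 p2 i0 j0).2 k \is (mkpat p1 p2 i0 j0).1.-homog.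
Proof.
move=> h1 h2 k /=; apply: dhomogM; exact: subst_homog.
Qed.

Lemma evp_mkpat p1 p2 i0 j0 c u v :
  (forall i, p1.2 i \is p1.1.-homog) -> (forall j, p2.2 j \is p2.1.-homog) ->
  evp (mkpat p1 p2 i0 j0) (scalev c (segre u v)) =
  scalev ((c * v j0) ^+ p1.1 * (c * u i0) ^+ p2.1) (segre (evp p1 u) (evp p2 v)).
Proof.
move=> h1 h2; apply: FunctionalExtensionality.functional_extensionality => k.
rewrite /evp /= evK_mul (evK_liftX _ _ _ _ (h1 _)) (evK_liftY _ _ _ _ (h2 _)).
rewrite /scalev /segre; ring.
Qed.

Definition allpats (pats1 : seq (nat * ('I_a.+1 -> polyK K a.+1)))
  (pats2 : seq (nat * ('I_b.+1 -> polyK K b.+1))) :=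
  List.flat_map (fun p1 => List.flat_map (fun p2 => List.flat_map (fun i0 =>
    List.map (fun j0 => mkpat p1 p2 i0 j0) (enum 'I_b.+1)) (enum 'I_a.+1)) pats2) pats1.

Lemma In_allpats pats1 pats2 pat : List.In pat (allpats pats1 pats2) <->
  exists p1 p2 i0 j0, List.In p1 pats1 /\ List.In p2 pats2 /\ pat = mkpat p1 p2 i0 j0.
Proof.
rewrite /allpats; split.
  move=> /List.in_flat_map [p1 [h1 /List.in_flat_map [p2 [h2 /List.in_flat_map [i0 [_ /List.in_map_iff [j0 [e _]]]]]]]].
  by exists p1, p2, i0, j0.
move=> [p1 [p2 [i0 [j0 [h1 [h2 ->]]]]]].
apply/List.in_flat_map; exists p1; split => //.
apply/List.in_flat_map; exists p2; split => //.
apply/List.in_flat_map; exists i0; split; first exact: In_enum.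
apply/List.in_map_iff; exists j0; split => //; exact: In_enum.
Qed.


Section Endo.
Variables (phi1 : ('I_a.+1 -> L) -> ('I_a.+1 -> L)) (pats1 : seq (nat * ('I_a.+1 -> polyK K a.+1))).
Variables (phi2 : ('I_b.+1 -> L) -> ('I_b.+1 -> L)) (pats2 : seq (nat * ('I_b.+1 -> polyK K b.+1))).
Hypothesis hp1 : forall pat, List.In pat pats1 -> forall i, pat.2 i \is pat.1.-homog.
Hypothesis hp2 : forall pat, List.In pat pats2 -> forall i, pat.2 i \is pat.1.-homog.
Hypothesis hk1 : forall x, ppts X x -> ppts X (phi1 x) /\
      (exists pat, List.In pat pats1 /\ nonzero_vec (fun i => evK iota (pat.2 i) x)) /\
      (forall pat, List.In pat pats1 -> nonzero_vec (fun i => evK iota (pat.2 i) x) ->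
         proportional (fun i => evK iota (pat.2 i) x) (phi1 x)).
Hypothesis hk2 : forall x, ppts Y x -> ppts Y (phi2 x) /\
      (exists pat, List.In pat pats2 /\ nonzero_vec (fun i => evK iota (pat.2 i) x)) /\
      (forall pat, List.In pat pats2 -> nonzero_vec (fun i => evK iota (pat.2 i) x) ->
         proportional (fun i => evK iota (pat.2 i) x) (phi2 x)).
Hypothesis nzX : NZ X.
Hypothesis nzY : NZ Y.

Local Notation pats := (allpats pats1 pats2).

Definition Phi (w : 'I_N.+1 -> L) : 'I_N.+1 -> L :=
  match List.find (fun pat => nzb (evp pat w)) pats with
  | Some pat => evp pat w
  | None => w
  end.

Lemma lemA u v w pat : ppts X u -> ppts Y v -> proportional (segre u v) w ->
  List.In pat pats -> nonzero_vec (evp pat w) ->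
  proportional (segre (phi1 u) (phi2 v)) (evp pat w).
Proof.
move=> hu hv [_ [c [hc ->]]] /In_allpats [p1 [p2 [i0 [j0 [h1 [h2 ->]]]]]].
rewrite -/(scalev c (segre u v)) evp_mkpat; try by [apply: hp1|apply: hp2].
move=> /nz_scale_inv [hs /segre_nz_inv [n1 n2]].
apply: prop_trans (prop_scale hs (segre_nz n1 n2)).
have [_ [_ q1]] := hk1 hu; have [_ [_ q2]] := hk2 hv.
apply: prop_segre; apply: prop_sym; [exact: q1|exact: q2].
Qed.

Lemma lemB u v w : ppts X u -> ppts Y v -> proportional (segre u v) w ->
  exists pat, List.In pat pats /\ nonzero_vec (evp pat w).
Proof.
move=> hu hv [_ [c [hc ->]]].
have [_ [[p1 [i1 n1]] _]] := hk1 hu; have [_ [[p2 [i2 n2]] _]] := hk2 hv.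
have [i0 hi0] := nzX hu; have [j0 hj0] := nzY hv.
exists (mkpat p1 p2 i0 j0); split.
  by apply/In_allpats; exists p1, p2, i0, j0.
rewrite -/(scalev c (segre u v)) evp_mkpat; try by [apply: hp1|apply: hp2].
apply: nz_scale; first by rewrite mulf_neq0 // expf_neq0 // mulf_neq0.
exact: segre_nz.
Qed.

Lemma lemC u v w : ppts X u -> ppts Y v -> proportional (segre u v) w ->
  proportional (segre (phi1 u) (phi2 v)) (Phi w).
Proof.
move=> hu hv hw; rewrite /Phi.
case E: (List.find _ _) => [pat|].
  have [hin /nzbP hnz] := List.find_some _ _ E.
  exact: lemA hu hv hw hin hnz.
have [pat [hin hnz]] := lemB hu hv hw.
have := List.find_none _ _ E pat hin.
by move/nzbP: hnz => ->.
Qed.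

Lemma Phi_endo : is_Kendo iota (pprod X Y) Phi.
Proof.
exists pats; split.
  move=> pat /In_allpats [p1 [p2 [i0 [j0 [h1 [h2 ->]]]]]].
  by apply: mkpat_homog; [apply: hp1|apply: hp2].
move=> x [u [v [hu [hv hx]]]]; split; [|split].
- exists (phi1 u), (phi2 v); split; first by case: (hk1 hu).
  split; first by case: (hk2 hv).
  exact: lemC.
- exact: lemB hu hv hx.
- move=> pat hin hnz.
  apply: prop_trans (prop_sym (lemA hu hv hx hin hnz)) (lemC hu hv hx).
Qed.

Lemma Phi_orbit a1 a2 n : ppts X a1 -> ppts Y a2 ->
  ppts X (iter n phi1 a1) /\ ppts Y (iter n phi2 a2) /\
  proportional (segre (iter n phi1 a1) (iter n phi2 a2)) (iter n Phi (segre a1 a2)).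
Proof.
move=> h1 h2; elim: n => [|n [ih1 [ih2 ih3]]] /=.
  by split => //; split => //; apply: prop_refl; apply: segre_nz; [apply: nzX|apply: nzY].
split; first by case: (hk1 ih1).
split; first by case: (hk2 ih2).
exact: lemC.
Qed.

End Endo.
End Bin.


Section Bin2.
Variables (K : fieldType) (L : closedFieldType) (iota : {rmorphism K -> L}).
Variables (X Y : pset L).
Local Notation a := (pdim X).
Local Notation b := (pdim Y).
Local Notation N := (b + a * b.+1)%N.

Lemma nz_coord n (x : 'I_n -> L) : nonzero_vec x -> exists i, x i != 0.
Proof. by []. Qed.

Lemma KDML_bin S1 S2 : NZ X -> NZ Y -> KDML iota X S1 -> KDML iota Y S2 ->
  KDML iota (pprod X Y) (fun n => S1 n \/ S2 n) /\
  KDML iota (pprod X Y) (fun n => S1 n /\ S2 n).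
Proof.
move=> nzX nzY [phi1 [[pats1 [hp1 hk1]] [a1 [ha1 [[r1 er1] [H1 [hH1 hS1]]]]]]].
move=> [phi2 [[pats2 [hp2 hk2]] [a2 [ha2 [[r2 er2] [H2 [hH2 hS2]]]]]]].
pose F := Phi iota pats1 pats2.
have endo : is_Kendo iota (pprod X Y) F by exact: (Phi_endo hp1 hp2 hk1 hk2 nzX nzY).
have hal : ppts (pprod X Y) (segre a1 a2).
  exists a1, a2; split => //; split => //; apply: prop_refl; apply: segre_nz; [exact: nzX|exact: nzY].
have rat : Krational iota (segre a1 a2).
  exists (fun k : 'I_N.+1 => r1 (inord (k %/ b.+1)) * r2 (inord (k %% b.+1))).
  apply: FunctionalExtensionality.functional_extensionality => k.
  by rewrite /segre er1 er2 rmorphM.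
have orb n := Phi_orbit hp1 hp2 hk1 hk2 nzX nzY n ha1 ha2.
have S1E n : S1 n <-> forall h, List.In h H1 -> evK iota h (iter n phi1 a1) = 0.
  rewrite hS1; have [o1 _] := orb n; tauto.
have S2E n : S2 n <-> forall h, List.In h H2 -> evK iota h (iter n phi2 a2) = 0.
  rewrite hS2; have [_ [o2 _]] := orb n; tauto.
split.
- exists F; split => //; exists (segre a1 a2); split => //; split => //.
  exists (List.flat_map (fun h1 => List.flat_map (fun h2 => List.flat_map (fun i =>
    List.map (fun j => liftX j h1 * liftY i h2) (enum 'I_b.+1)) (enum 'I_a.+1)) H2) H1).
  split.
    move=> h /List.in_flat_map [h1 [i1 /List.in_flat_map [h2 [i2 /List.in_flat_map [i [_ /List.in_map_iff [j [<- _]]]]]]]].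
    have [d1 hd1] := hH1 _ i1; have [d2 hd2] := hH2 _ i2.
    exists (d1 + d2)%N; apply: dhomogM; exact: subst_homog.
  move=> n; rewrite S1E S2E.
  have [o1 [o2 o3]] := orb n; have [_ [c [hc ew]]] := o3.
  set u := iter n phi1 a1 in o1 o3 ew *; set v := iter n phi2 a2 in o2 o3 ew *.
  have evH h1 h2 i j d1 d2 : h1 \is d1.-homog -> h2 \is d2.-homog ->
     evK iota (liftX j h1 * liftY i h2) (iter n F (segre a1 a2)) =
     (c * v j) ^+ d1 * evK iota h1 u * ((c * u i) ^+ d2 * evK iota h2 v).
    move=> e1 e2; rewrite ew evK_mul -/(scalev c (segre u v)).
    by rewrite (evK_liftX _ _ _ _ _ e1) (evK_liftY _ _ _ _ _ e2).
  split.
    move=> hor; split; first by exists u, v; by [].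
    move=> h /List.in_flat_map [h1 [i1 /List.in_flat_map [h2 [i2 /List.in_flat_map [i [_ /List.in_map_iff [j [<- _]]]]]]]].
    have [d1 hd1] := hH1 _ i1; have [d2 hd2] := hH2 _ i2.
    rewrite (evH _ _ _ _ _ _ hd1 hd2).
    case: hor => [z|z]; rewrite z //; ring.
  move=> [_ hall].
  case: (Classical_Prop.classic (forall h, List.In h H1 -> evK iota h u = 0)) => [A|A]; first by left.
  right => h2 i2.
  have [h1 [i1 ne1]] : exists h1, List.In h1 H1 /\ evK iota h1 u != 0.
    apply: Classical_Prop.NNPP => B; apply: A => h1 i1.
    apply/eqP; apply: Classical_Prop.NNPP => C; apply: B; exists h1; split; [exact: i1|exact/negP].
  have [d1 hd1] := hH1 _ i1; have [d2 hd2] := hH2 _ i2.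
  have [i hi] := nzX _ o1; have [j hj] := nzY _ o2.
  have := hall (liftX j h1 * liftY i h2).
  rewrite (evH _ _ _ _ _ _ hd1 hd2) => /(_ _)/eqP.
  rewrite !mulf_eq0 !expf_eq0 !mulf_eq0 (negbTE hc) (negbTE hi) (negbTE hj) (negbTE ne1) !andbF /=.
  move=> H; apply/eqP; apply: H.
  apply/List.in_flat_map; exists h1; split => //.
  apply/List.in_flat_map; exists h2; split => //.
  apply/List.in_flat_map; exists i; split; first exact: In_enum.
  apply/List.in_map_iff; exists j; split => //; exact: In_enum.
- exists F; split => //; exists (segre a1 a2); split => //; split => //.
  exists (List.flat_map (fun h1 => List.map (fun j => liftX j h1) (enum 'I_b.+1)) H1 ++
          List.flat_map (fun h2 => List.map (fun i => liftY i h2) (enum 'I_a.+1)) H2).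
  split.
    move=> h /List.in_app_iff [/List.in_flat_map [h1 [i1 /List.in_map_iff [j [<- _]]]]|
                               /List.in_flat_map [h2 [i2 /List.in_map_iff [i [<- _]]]]].
      have [d1 hd1] := hH1 _ i1; exists d1; exact: subst_homog.
    have [d2 hd2] := hH2 _ i2; exists d2; exact: subst_homog.
  move=> n; rewrite S1E S2E.
  have [o1 [o2 o3]] := orb n; have [_ [c [hc ew]]] := o3.
  set u := iter n phi1 a1 in o1 o3 ew *; set v := iter n phi2 a2 in o2 o3 ew *.
  have [i0 hi0] := nzX _ o1; have [j0 hj0] := nzY _ o2.
  split.
    move=> [A B]; split; first by exists u, v.
    move=> h /List.in_app_iff [/List.in_flat_map [h1 [i1 /List.in_map_iff [j [<- _]]]]|
                               /List.in_flat_map [h2 [i2 /List.in_map_iff [i [<- _]]]]].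
      have [d1 hd1] := hH1 _ i1.
      by rewrite ew -/(scalev c (segre u v)) (evK_liftX _ _ _ _ _ hd1) A // mulr0.
    have [d2 hd2] := hH2 _ i2.
    by rewrite ew -/(scalev c (segre u v)) (evK_liftY _ _ _ _ _ hd2) B // mulr0.
  move=> [_ hall]; split.
    move=> h1 i1; have [d1 hd1] := hH1 _ i1.
    have := hall (liftX j0 h1).
    rewrite ew -/(scalev c (segre u v)) (evK_liftX _ _ _ _ _ hd1) => /(_ _)/eqP.
    rewrite mulf_eq0 expf_eq0 mulf_eq0 (negbTE hc) (negbTE hj0) andbF /= => H; apply/eqP; apply: H.
    apply/List.in_app_iff; left; apply/List.in_flat_map; exists h1; split => //.
    apply/List.in_map_iff; exists j0; split => //; exact: In_enum.
  move=> h2 i2; have [d2 hd2] := hH2 _ i2.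
  have := hall (liftY i0 h2).
  rewrite ew -/(scalev c (segre u v)) (evK_liftY _ _ _ _ _ hd2) => /(_ _)/eqP.
  rewrite mulf_eq0 expf_eq0 mulf_eq0 (negbTE hc) (negbTE hi0) andbF /= => H; apply/eqP; apply: H.
  apply/List.in_app_iff; right; apply/List.in_flat_map; exists h2; split => //.
  apply/List.in_map_iff; exists i0; split => //; exact: In_enum.
Qed.

End Bin2.

Lemma KDML_ext (K : fieldType) (L : closedFieldType) (iota : {rmorphism K -> L})
  (X : pset L) (S S' : nat -> Prop) :
  (forall n, S n <-> S' n) -> KDML iota X S -> KDML iota X S'.
Proof.
move=> e [phi [h1 [al [h2 [h3 [H [h4 h5]]]]]]].
exists phi; split => //; exists al; split => //; split => //; exists H; split => //.
by move=> n; rewrite -e.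
Qed.

Lemma NZ_qp (K : fieldType) (L : closedFieldType) (iota : {rmorphism K -> L}) (X : pset L) :
  is_qpvar iota X -> NZ X.
Proof. by move=> [F [G [_ [_ e]]]] x /e []. Qed.

Lemma NZ_pprod (L : closedFieldType) (X Y : pset L) : NZ (pprod X Y).
Proof. by move=> z [x [y [_ [_ h]]]]; exact: prop_nz2 h. Qed.

Lemma main_ind (K : fieldType) (L : closedFieldType) (iota : {rmorphism K -> L})
  (XS : seq (pset L * (nat -> Prop))) :
  XS <> [::] ->
  (forall XSi, List.In XSi XS -> is_qpvar iota XSi.1) ->
  (forall XSi, List.In XSi XS -> KDML iota XSi.1 XSi.2) ->
  NZ (pprod_seq (map fst XS)) /\
  KDML iota (pprod_seq (map fst XS)) (fun n => exists XSi, List.In XSi XS /\ XSi.2 n) /\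
  KDML iota (pprod_seq (map fst XS)) (fun n => forall XSi, List.In XSi XS -> XSi.2 n).
Proof.
elim: XS => [//|X XS IH] _ hX hS.
case: XS IH hX hS => [|Y XS] IH hX hS.
  have q := hX X (or_introl erefl); have k := hS X (or_introl erefl).
  split; first exact: (NZ_qp q).
  split; apply: KDML_ext k => n /=; split.
  - by move=> h; exists X; split => //; left.
  - by move=> [Z [[<-|[]] h]].
  - by move=> h Z [<-|[]].
  - by move=> h; apply: h; left.
have [nzT [kU kI]] : NZ (pprod_seq (map fst (Y :: XS))) /\
  KDML iota (pprod_seq (map fst (Y :: XS))) (fun n => exists XSi, List.In XSi (Y :: XS) /\ XSi.2 n) /\
  KDML iota (pprod_seq (map fst (Y :: XS))) (fun n => forall XSi, List.In XSi (Y :: XS) -> XSi.2 n).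
  by apply: IH => // Z hZ; [apply: hX|apply: hS]; right.
have nzX : NZ X.1 by apply: NZ_qp; apply: hX; left.
have kX := hS X (or_introl erefl).
have [bU _] := KDML_bin nzX nzT kX kU.
have [_ bI] := KDML_bin nzX nzT kX kI.
change (pprod_seq (map fst [:: X, Y & XS])) with (pprod X.1 (pprod_seq (map fst (Y :: XS)))).
split; first exact: NZ_pprod.
split.
  apply: KDML_ext bU => n; split.
    move=> [h|[Z [hZ h]]].
      by exists X; split; [left|].
    by exists Z; split; [right|].
  move=> [Z [[e|hZ] h]].
    by left; rewrite e.
  by right; exists Z.
apply: KDML_ext bI => n; split.
  by move=> [h1 h2] Z [<-|hZ] //; apply: h2.
by move=> h; split; [apply: h; left|move=> Z hZ; apply: h; right].
Qed.

End Helpers.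

Theorem lemma2p1 (K : fieldType) (L : closedFieldType) (iota : {rmorphism K -> L})
  (hK : ~ (forall x : K, x = 0%R \/ x = 1%R))
  (XS : seq (pset L * (nat -> Prop)))
  (hm : XS <> [::])
  (hX : forall XSi, List.In XSi XS -> is_qpvar iota XSi.1)
  (hS : forall XSi, List.In XSi XS -> KDML iota XSi.1 XSi.2) :
  KDML iota (pprod_seq (map fst XS)) (fun n => exists XSi, List.In XSi XS /\ XSi.2 n) /\
  KDML iota (pprod_seq (map fst XS)) (fun n => forall XSi, List.In XSi XS -> XSi.2 n).
Proof.
by have [_ h] := Helpers.main_ind hm hX hS.
Qed.
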